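(* Let $(X,d)$ be a complete metric space, $\lambda>0$, and $\ell\in\mathrm{LSC}(X)$ bounded with $\inf_X\ell=0$. Then there exists a unique solution of $(\mathcal{G}_\lambda)$. Moreover, this solution is bounded and Lipschitz.
   Context: $\mathrm{LSC}(X)$ is the set of real-valued lower semicontinuous functions on $X$. Global slope: $G[u](x)=\sup_{y\neq x}\frac{(u(x)-u(y))_+}{d(x,y)}$ if $u(x)<+\infty$, $G[u](x)=+\infty$ otherwise. Equation $(\mathcal{G}_\lambda)$: a solution is a lower semicontinuous $u:X\to\mathbb{R}\cup\{+\infty\}$ with $\inf_Xu=0$ and $\lambda u(x)+G[u](x)=\ell(x)$ for all $x\in X$. *)

(* Defs.v *)
(* reals are an abstract R : realType,
   extended reals \bar R model R \cup {+oo} (values -oo excluded explicitly). *)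
From mathcomp Require Import all_boot all_order all_algebra.
From mathcomp Require Import all_classical all_reals all_analysis.
Set Implicit Arguments. Unset Strict Implicit. Unset Printing Implicit Defensive.
Import Order.TTheory GRing.Theory Num.Theory.
Local Open Scope classical_set_scope.
Local Open Scope ring_scope.

Definition is_metric (R : realType) (X : Type) (d : X -> X -> R) : Prop :=
  (forall x y, 0 <= d x y) /\
  (forall x y, d x y = 0 <-> x = y) /\
  (forall x y, d x y = d y x) /\
  (forall x y z, d x z <= d x y + d y z).

Definition d_cauchy (R : realType) (X : Type) (d : X -> X -> R) (s : nat -> X) : Prop :=
  forall e : R, 0 < e -> exists N : nat, forall m n : nat,
    (N <= m)%N -> (N <= n)%N -> d (s m) (s n) < e.

Definition d_converges (R : realType) (X : Type) (d : X -> X -> R) (s : nat -> X) (x : X) : Prop :=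
  forall e : R, 0 < e -> exists N : nat, forall n : nat, (N <= n)%N -> d (s n) x < e.

Definition complete_metric (R : realType) (X : Type) (d : X -> X -> R) : Prop :=
  forall s : nat -> X, d_cauchy d s -> exists x, d_converges d s x.

Definition lsc (R : realType) (X : Type) (d : X -> X -> R) (u : X -> \bar R) : Prop :=
  forall (x : X) (t : \bar R), (t < u x)%E ->
    exists2 delta : R, 0 < delta & forall y, d x y < delta -> (t < u y)%E.

(* global slope; for the sup over y <> x we adjoin 0 (all quotients are >= 0),
   so that the sup over an empty family is 0 *)
Definition global_slope (R : realType) (X : Type) (d : X -> X -> R) (u : X -> \bar R)
  (x : X) : \bar R :=
  if u x == +oo%E then +oo%E
  else ereal_sup [set z : \bar R | z = 0%E \/
         exists2 y : X, y <> x & z = (maxe (u x - u y) 0 * ((d x y)^-1)%:E)%E].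

Definition solves_G (R : realType) (X : Type) (d : X -> X -> R) (lam : R) (l : X -> R)
  (u : X -> \bar R) : Prop :=
  (forall x, u x != -oo%E) /\
  lsc d u /\
  ereal_inf (range u) = 0%E /\
  (forall x, (lam%:E * u x + global_slope d u x)%E = (l x)%:E).

(* Main.v *)
Require Import Defs.
From mathcomp Require Import all_boot all_order all_algebra.
From mathcomp Require Import all_classical all_reals all_analysis.
From mathcomp Require Import lra.
Import Order.TTheory GRing.Theory Num.Theory.
Local Open Scope classical_set_scope.
Local Open Scope ring_scope.
Set Implicit Arguments. Unset Strict Implicit.

Lemma small_inv (R : realType) (e : R) : 0 < e -> exists n : nat, (n.+1%:R)^-1 < e.
Proof.
move=> e0; exists (Num.truncn (e^-1)).
have h := truncnS_gt (e^-1).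
rewrite -[e in _ < e]invrK ltf_pV2 ?posrE ?invr_gt0 ?ltr0n //.
Qed.

Arguments small_inv {R}.

Lemma ekeland (R : realType) (X : Type) (d : X -> X -> R)
  (hd : is_metric d) (hc : complete_metric d) (psi : X -> R) (K B c : R) :
  0 < c -> 0 <= K -> (forall x y, psi x - psi y <= K * d x y) ->
  (forall x, psi x <= B) -> forall x0, exists xs,
  psi x0 <= psi xs /\ forall y, y <> xs -> psi y - psi xs < c * d xs y.
Proof.
move=> c0 K0 hK hB x0.
case: hd => [d0 [dxx [dsym dtri]]].
pose S x y := c * d x y <= psi y - psi x.
have Srefl x : S x x by rewrite /S (proj2 (dxx x x) erefl) mulr0 subrr.
have Strans x y z : S x y -> S y z -> S x z.
  rewrite /S => h1 h2; have := dtri x y z.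
  move=> h3; have : c * d x z <= c * (d x y + d y z) by rewrite ler_pM2l.
  rewrite mulrDr; lra.
have step : forall p : X * nat, exists y, S p.1 y /\
    forall z, S p.1 z -> psi z <= psi y + (p.2.+1%:R)^-1.
  case=> x n /=.
  pose E := [set psi z | z in S x].
  have hs : has_sup E.
    split; first by exists (psi x); exists x.
    by exists B => r [z _ <-].
  have ep : 0 < (n.+1%:R : R)^-1 by rewrite invr_gt0 ltr0n.
  have [r [y Sy <-] hr] := sup_adherent ep hs.
  exists y; split => // z Sz.
  have : psi z <= sup E by apply: ub_le_sup => //; [case: hs | exists z].
  move=> hh; apply: ltW; apply: (le_lt_trans hh); by rewrite -ltrBlDr.
have [f hf] := choice step.
pose xs := fix xs n := match n with 0 => x0 | n'.+1 => f (xs n', n') end.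
have F1 n : S (xs n) (xs n.+1) /\ forall z, S (xs n) z -> psi z <= psi (xs n.+1) + (n.+1%:R)^-1.
  exact: (hf (xs n, n)).
have xs0 : xs 0%N = x0 by [].
clearbody xs.
have F2 n k : S (xs n) (xs (n + k)%N).
  elim: k => [|k IH]; first by rewrite addn0.
  by rewrite addnS; apply: Strans IH (proj1 (F1 _)).
have F3 n z : S (xs n.+1) z -> c * d (xs n.+1) z <= (n.+1%:R)^-1.
  move=> h; have := (proj2 (F1 n)) z (Strans _ _ _ (proj1 (F1 n)) h).
  rewrite /S in h; move: (n.+1%:R^-1) => t; lra.
have F3' n z : S (xs n.+1) z -> d (xs n.+1) z <= (n.+1%:R)^-1 / c.
  move=> /F3 h; rewrite ler_pdivlMr // mulrC //.
have Fm n m : (n < m)%N -> S (xs n.+1) (xs m).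
  move=> nm; have := F2 n.+1 (m - n.+1)%N; rewrite subnKC //.
have cauchy : d_cauchy d xs.
  move=> e e0.
  have [N hN] := small_inv (e * c / 2 : R) ltac:(by rewrite divr_gt0 ?mulr_gt0).
  exists N.+1 => m n hm hn.
  have h1 := F3' N (xs m) (Fm N m hm).
  have h2 := F3' N (xs n) (Fm N n hn).
  have h3 := dtri (xs m) (xs N.+1) (xs n).
  rewrite [d (xs m) (xs N.+1)]dsym in h3.
  have h4 : (N.+1%:R)^-1 / c < e / 2.
    by rewrite ltr_pdivrMr // mulrAC.
  move: ((N.+1%:R)^-1 / c) h1 h2 h4 => t h1 h2 h4; lra.
have [xst hx] := hc _ cauchy.
have Sxs n : S (xs n) xst.
  apply/ler_addgt0Pr => eta eta0.
  have [N hN] := hx (eta / (c + K + 1)) ltac:(by rewrite divr_gt0 //; lra).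
  pose m := maxn N n.
  have hm := hN m (leq_maxl _ _).
  have := F2 n (m - n)%N; rewrite subnKC ?leq_maxr // => Snm.
  have t1 := dtri (xs n) (xs m) xst.
  have t2 := hK (xs m) xst.
  have hA : c * d (xs n) xst <= c * (d (xs n) (xs m) + d (xs m) xst) by rewrite ler_pM2l.
  rewrite /S in Snm *.
  have dm0 := d0 (xs m) xst.
  have hlt : (c + K + 1) * d (xs m) xst < eta.
    by rewrite mulrC -ltr_pdivlMr //; lra.
  rewrite !mulrDl mul1r in hlt; rewrite mulrDr in hA.
  lra.
exists xst; split.
  have := Sxs 0%N; rewrite /S xs0; have := mulr_ge0 (ltW c0) (d0 x0 xst); lra.
move=> y yx; rewrite ltNge; apply/negP => Sy.
apply: yx; apply/(proj1 (dxx _ _)).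
apply/le_anti; rewrite d0 andbT.
apply/ler_addgt0Pr => e e0; rewrite add0r.
have [N hN] := small_inv (e * c / 2 : R) ltac:(by rewrite divr_gt0 ?mulr_gt0).
have h1 := F3' N y (Strans _ _ _ (Sxs N.+1) Sy).
have h2 := F3' N xst (Sxs N.+1).
have h3 := dtri xst (xs N.+1) y.
rewrite [d xst (xs N.+1)]dsym in h3.
have h4 : (N.+1%:R)^-1 / c < e / 2 by rewrite ltr_pdivrMr // mulrAC.
move: ((N.+1%:R)^-1 / c) h1 h2 h4 => t h1 h2 h4; rewrite dsym; lra.
Qed.

Lemma slope_fin (R : realType) (X : Type) (d : X -> X -> R) (u : X -> R) x y :
  (maxe ((u x)%:E - (u y)%:E) 0 * ((d x y)^-1)%:E)%E =
  (Num.max (u x - u y) 0 * (d x y)^-1)%:E.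
Proof. by rewrite -EFinB -EFin_max -EFinM. Qed.

Lemma gs_unfold (R : realType) (X : Type) (d : X -> X -> R) (u : X -> R) x :
  global_slope d (fun z => (u z)%:E) x =
  ereal_sup [set z : \bar R | z = 0%E \/
         exists2 y : X, y <> x & z = (Num.max (u x - u y) 0 * (d x y)^-1)%:E].
Proof.
have -> : global_slope d (fun z => (u z)%:E) x = ereal_sup [set z : \bar R | z = 0%E \/
         exists2 y : X, y <> x & z = (maxe ((u x)%:E - (u y)%:E) 0 * ((d x y)^-1)%:E)%E] by [].
congr (ereal_sup _); apply: funext => z; apply: propext; split.
  by case=> [->|[y yx ->]]; [left|right; exists y => //; rewrite slope_fin].
by case=> [->|[y yx ->]]; [left|right; exists y => //; rewrite slope_fin].
Qed.

Lemma gs_le (R : realType) (X : Type) (d : X -> X -> R) (u : X -> R) x (a : R) :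
  (global_slope d (fun z => (u z)%:E) x <= a%:E)%E <->
  (0 <= a /\ forall y, y <> x -> Num.max (u x - u y) 0 * (d x y)^-1 <= a).
Proof.
rewrite gs_unfold; split.
  move=> h; split.
    rewrite -lee_fin; apply: le_trans h; apply: ereal_sup_ubound; by left.
  move=> y yx; rewrite -lee_fin; apply: le_trans h; apply: ereal_sup_ubound.
  by right; exists y.
case=> a0 h; apply: ge_ereal_sup => z [->|[y yx ->]]; rewrite lee_fin //.
exact: h.
Qed.

Lemma gs_gt (R : realType) (X : Type) (d : X -> X -> R) (u : X -> R) x (a : R) :
  0 <= a -> (a%:E < global_slope d (fun z => (u z)%:E) x)%E ->
  exists2 y, y <> x & a < Num.max (u x - u y) 0 * (d x y)^-1.
Proof.
move=> a0; rewrite gs_unfold => /ereal_sup_gt [z [->|[y yx ->]]].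
  by rewrite lte_fin ltNge a0.
by rewrite lte_fin => h; exists y.
Qed.

Definition subsol (R : realType) (X : Type) (d : X -> X -> R) (lam : R) (l : X -> R)
  (u : X -> R) : Prop :=
  (forall x, 0 <= u x) /\ (forall x, lam * u x <= l x) /\
  (forall x y, u x - u y <= (l x - lam * u x) * d x y).

Definition supersol (R : realType) (X : Type) (d : X -> X -> R) (lam : R) (l : X -> R)
  (u : X -> R) : Prop :=
  forall x a, 0 <= a -> a < l x - lam * u x -> exists2 y, y <> x & a * d x y < u x - u y.

Lemma sub_lip (R : realType) (X : Type) (d : X -> X -> R) (hd : is_metric d)
  (lam : R) (l : X -> R) (M : R) (hlam : 0 < lam) (hM : forall x, `|l x| <= M) u :
  subsol d lam l u -> forall x y, `|u x - u y| <= M * d x y.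
Proof.
case: hd => [d0 [dxx [dsym dtri]]].
case=> [u0 [ul uL]].
have H x y : u x - u y <= M * d x y.
  apply: le_trans (uL x y) _; apply: ler_wpM2r; first exact: d0.
  have h := le_trans (ler_norm _) (hM x).
  have := mulr_ge0 (ltW hlam) (u0 x); lra.
move=> x y; rewrite ler_norml; apply/andP; split; last exact: H.
have := H y x; rewrite dsym; lra.
Qed.

Lemma compare (R : realType) (X : Type) (d : X -> X -> R) (hd : is_metric d)
  (hc : complete_metric d)
  (lam : R) (l : X -> R) (M : R) (hlam : 0 < lam) (hM : forall x, `|l x| <= M) v w :
  subsol d lam l v -> subsol d lam l w -> supersol d lam l w -> forall x, v x <= w x.
Proof.
move=> hv hw sw x; rewrite leNgt; apply/negP => hx.
have M0 : 0 <= M by apply: le_trans (hM x).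
have [delta [deltaE dpos]] : exists delta, v x - w x = delta /\ 0 < delta.
  by exists (v x - w x); split => //; rewrite subr_gt0.
pose psi z := v z - w z.
have hlv := sub_lip hd hlam hM hv.
have hlw := sub_lip hd hlam hM hw.
case: (hd) => [d0 [dxx [dsym dtri]]].
have hK : forall a b, psi a - psi b <= (M + M) * d a b.
  move=> a b; have := hlv a b; have := hlw a b; rewrite !ler_norml mulrDl.
  move=> /andP [h1 h2] /andP [h3 h4]; rewrite /psi; lra.
have hB : forall z, psi z <= M / lam.
  move=> z; case: hv => [v0 [vl _]]; case: hw => [w0 _].
  have : v z <= M / lam.
    rewrite ler_pdivlMr // mulrC; apply: le_trans (vl z) _.
    by have := hM z; rewrite ler_norml => /andP [].
  have := w0 z; rewrite /psi; lra.
have c0 : 0 < lam * delta / 4 by rewrite divr_gt0 // mulr_gt0.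
have [xs [hxs hmin]] := ekeland hd hc c0 (addr_ge0 M0 M0) hK hB x.
case: hv => [v0 [vl vL]].
pose a := l xs - lam * v xs + lam * delta / 2.
have a0 : 0 <= a.
  have := vl xs; have : 0 <= lam * delta / 2 by rewrite divr_ge0 // mulr_ge0 // ltW.
  rewrite /a; lra.
have alt : a < l xs - lam * w xs.
  have h1 : lam * delta <= lam * (v xs - w xs) by rewrite ler_pM2l // -deltaE.
  have h2 := mulr_gt0 hlam dpos.
  rewrite [lam * (_ - _)]mulrBr in h1; rewrite /a.
  move: (lam * delta) h1 h2 => t h1 h2; lra.
have [y yx hy] := sw xs a a0 alt.
have := hmin y yx; have := vL xs y.
have D0 := d0 xs y.
have : lam * delta / 4 * d xs y <= lam * delta / 2 * d xs y.
  by apply: ler_wpM2r => //; rewrite ler_pM2l ?mulr_gt0 // lef_pV2 ?posrE //; lra.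
move: hy; rewrite /a /psi !mulrDl.
move: (lam * delta / 4 * d xs y) (lam * delta / 2 * d xs y) => t1 t2; lra.
Qed.

Lemma sol_real (R : realType) (X : Type) (d : X -> X -> R) (hd : is_metric d)
  (lam : R) (l : X -> R) (hlam : 0 < lam) w :
  solves_G d lam l w -> exists v : X -> R,
    w = (fun x => (v x)%:E) /\ subsol d lam l v /\ supersol d lam l v.
Proof.
case: (hd) => [d0 [dxx [dsym dtri]]].
case=> [wn [wlsc [winf weq]]].
have wfin x : w x = (fine (w x))%:E.
  move: (weq x) (wn x); rewrite /global_slope.
  case E: (w x) => [r| |] //=.
  by rewrite mulry gtr0_sg // mul1e.
pose v := fun x => fine (w x).
have wE : w = (fun x => (v x)%:E) by apply: funext => x; exact: wfin.
exists v; split => //.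
rewrite wE in winf weq.
have gE x : global_slope d (fun z => (v z)%:E) x = (l x - lam * v x)%:E.
  move: (weq x); case: (global_slope d (fun z => (v z)%:E) x) => [g| |].
  - rewrite -EFinM -EFinD => -[h]; congr EFin; lra.
  - by rewrite -EFinM addey.
  - by rewrite -EFinM addeNy.
have v0 x : 0 <= v x.
  have : (ereal_inf (range (fun z => (v z)%:E)) <= (v x)%:E)%E.
    by apply: ereal_inf_lbound; exists x.
  by rewrite winf lee_fin.
have gl x := proj1 (gs_le d v x (l x - lam * v x)) ltac:(by rewrite gE).
split; first split => //; first split.
- by move=> x; have [h _] := gl x; lra.
- move=> x y; have [h1 h2] := gl x.
  case: (pselect (y = x)) => [->|yx].
    by rewrite subrr mulr_ge0.
  have dpos : 0 < d x y.
    rewrite lt_neqAle d0 andbT eq_sym; apply/eqP => /dxx h; exact: yx (esym h).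
  have := h2 y yx; rewrite ler_pdivrMr // => h3.
  apply: le_trans h3; rewrite le_max lexx //.
- move=> x a a0 alt.
  have [y yx hy] := @gs_gt _ _ d v x a a0 ltac:(by rewrite gE lte_fin).
  exists y => //.
  have dpos : 0 < d x y.
    rewrite lt_neqAle d0 andbT eq_sym; apply/eqP => /dxx h; exact: yx (esym h).
  move: hy; rewrite ltr_pdivlMr // lt_max => /orP [//|h].
  have := mulr_ge0 a0 (ltW dpos); lra.
Qed.

Lemma maximal_sol (R : realType) (X : Type) (d : X -> X -> R) (hd : is_metric d)
  (lam : R) (l : X -> R) (hlam : 0 < lam)
  (hlsc : forall x t, t < l x -> exists2 del : R, 0 < del & forall y, d x y < del -> t < l y)
  (U : X -> R) : subsol d lam l U ->
  (forall V, subsol d lam l V -> forall z, V z <= U z) ->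
  forall x, global_slope d (fun z => (U z)%:E) x = (l x - lam * U x)%:E.
Proof.
case: (hd) => [d0 [dxx [dsym dtri]]].
move=> hU hmax x0.
case: (hU) => [U0 [Ul UL]].
apply/le_anti/andP; split.
  apply/gs_le; split; first by have := Ul x0; lra.
  move=> y yx.
  have dpos : 0 < d x0 y.
    rewrite lt_neqAle d0 andbT eq_sym; apply/eqP => /dxx h; exact: yx (esym h).
  rewrite ler_pdivrMr // ge_max UL /= mulr_ge0 //; have := Ul x0; lra.
rewrite leNgt; apply/negP => hlt.
have G0 : (0%E <= global_slope d (fun z => (U z)%:E) x0)%E.
  by rewrite gs_unfold; apply: ereal_sup_ubound; left.
move: hlt G0; case E: (global_slope d (fun z => (U z)%:E) x0) => [g| |] //.
rewrite lte_fin lee_fin => hlt g0.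
have [_ hg] := proj1 (gs_le d U x0 g) ltac:(by rewrite E).
have hgU y : U x0 - U y <= g * d x0 y.
  case: (pselect (y = x0)) => [->|yx]; first by rewrite subrr mulr_ge0.
  have dpos : 0 < d x0 y.
    rewrite lt_neqAle d0 andbT eq_sym; apply/eqP => /dxx h; exact: yx (esym h).
  have := hg y yx; rewrite ler_pdivrMr // ge_max => /andP [h _]; exact: h.
have [s [sE s0]] : exists s, s = l x0 - lam * U x0 - g /\ 0 < s.
  by exists (l x0 - lam * U x0 - g); split => //; lra.
have [del del0 hdel] := hlsc x0 (l x0 - s / 4) ltac:(lra).
have [k [kE k0]] : exists k, k = g + s / 2 /\ 0 <= k by exists (g + s / 2); split => //; lra.
pose h := Num.min (s / (8 * lam)) (del * s / 4).
have h0 : 0 < h by rewrite lt_min !divr_gt0 ?mulr_gt0.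
have hh1 : lam * h <= s / 8.
  have : h <= s / (8 * lam) by rewrite ge_min lexx.
  rewrite ler_pdivlMr ?mulr_gt0 //; lra.
have hh2 : h <= del * s / 4 by rewrite ge_min lexx orbT.
clearbody h.
pose phi z := U x0 + h - k * d z x0.
have C z : U z < phi z -> k <= l z - lam * phi z.
  rewrite /phi => hz.
  have h1 := hgU z; rewrite [d x0 z]dsym in h1.
  have D0 := d0 z x0.
  have hD : d z x0 < del / 2 by nra.
  have hl := hdel z ltac:(rewrite dsym; lra).
  have : 0 <= lam * (k * d z x0) by rewrite mulr_ge0 ?mulr_ge0 // ltW.
  nra.
pose V z := Num.max (U z) (phi z).
have VU z : U z <= V z by rewrite le_max lexx.
have Vphi z : phi z <= V z by rewrite le_max lexx orbT.
have subV : subsol d lam l V.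
  split; [|split].
  - move=> z; apply: le_trans (VU z); exact: U0.
  - move=> z; rewrite /V; case: (leP (phi z) (U z)) => hz.
      exact: Ul.
    have := C z hz; lra.
  - move=> z y; rewrite /V; case: (leP (phi z) (U z)) => hz.
      have := VU y; have := UL z y; rewrite /V; lra.
    have c1 := C z hz.
    have c2 : k * d z y <= (l z - lam * phi z) * d z y by rewrite ler_wpM2r.
    have t1 := dtri y z x0; rewrite [d y z]dsym in t1.
    have t2 : k * d y x0 <= k * (d z y + d z x0) by rewrite ler_wpM2l.
    have := Vphi y; rewrite /V /phi; rewrite /phi in c2; nra.
have := hmax V subV x0.
have := Vphi x0; rewrite /phi (proj2 (dxx x0 x0) erefl) mulr0; lra.
Qed.

Theorem corollary3p15 (R : realType) (X : Type) (d : X -> X -> R)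
  (hd : is_metric d) (hc : complete_metric d)
  (lam : R) (hlam : 0 < lam) (l : X -> R)
  (hl : lsc d (fun x => (l x)%:E))
  (hb : exists M : R, forall x, `|l x| <= M)
  (hinf : ereal_inf (range (fun x => (l x)%:E)) = 0%E) :
  exists u : X -> \bar R,
    solves_G d lam l u /\
    (forall w : X -> \bar R, solves_G d lam l w -> w = u) /\
    exists v : X -> R,
      (forall x, u x = (v x)%:E) /\
      (exists M : R, forall x, `|v x| <= M) /\
      (exists L : R, forall x y, `|v x - v y| <= L * d x y).
Proof.
case: (hd) => [d0 [dxx [dsym dtri]]].
case: hb => M hM.
have l0 x : 0 <= l x.
  have : (ereal_inf (range (fun z => (l z)%:E)) <= (l x)%:E)%E.
    by apply: ereal_inf_lbound; exists x.
  by rewrite hinf lee_fin.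
have hlsc x t : t < l x -> exists2 del : R, 0 < del & forall y, d x y < del -> t < l y.
  move=> ht; have [del del0 hdel] := hl x t%:E ltac:(by rewrite lte_fin).
  by exists del => // y /hdel; rewrite lte_fin.
pose E x := [set r : R | exists2 u, subsol d lam l u & r = u x].
pose U x := sup (E x).
have sub0 : subsol d lam l (fun _ => 0).
  split; [by []|split]; first by move=> x; rewrite mulr0.
  by move=> x y; rewrite subrr mulr0 subr0 mulr_ge0.
have hasU x : has_sup (E x).
  split; first by exists 0; exists (fun _ => 0).
  exists (l x / lam) => r [u [u0 [ul _]] ->].
  by rewrite ler_pdivlMr // mulrC.
have leU u : subsol d lam l u -> forall x, u x <= U x.
  move=> su x; apply: ub_le_sup; first by case: (hasU x).
  by exists u.
have Ule x b : (forall u, subsol d lam l u -> u x <= b) -> U x <= b.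
  move=> h; apply: ge_sup; first by case: (hasU x).
  by move=> r [u su ->]; exact: h.
have subU : subsol d lam l U.
  split; [|split].
  - by move=> x; exact: (leU _ sub0).
  - move=> x; have : U x <= l x / lam.
      by apply: Ule => u [_ [ul _]]; rewrite ler_pdivlMr // mulrC.
    by rewrite ler_pdivlMr // mulrC.
  - move=> x y.
    have D0 := d0 x y.
    have p0 : 0 < 1 + lam * d x y by have := mulr_ge0 (ltW hlam) D0; lra.
    have : U x <= (U y + l x * d x y) / (1 + lam * d x y).
      apply: Ule => u [u0 [ul uL]].
      rewrite ler_pdivlMr //.
      have := uL x y; have := leU u (conj u0 (conj ul uL)) y; nra.
    rewrite ler_pdivlMr //; nra.
have Umax V : subsol d lam l V -> forall z, V z <= U z by move=> sV z; exact: leU.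
have gU := maximal_sol hd hlam hlsc subU Umax.
have hlipU := sub_lip hd hlam hM subU.
have solU : solves_G d lam l (fun x => (U x)%:E).
  case: (subU) => [U0 [Ul UL]].
  split; first by [].
  split.
    move=> x [r| |] ht.
    - have M0 : 0 <= M by apply: le_trans (hM x).
      rewrite lte_fin in ht.
      exists ((U x - r) / (M + 1)); first by rewrite divr_gt0 //; lra.
      move=> y hy; rewrite lte_fin.
      have := hlipU x y; rewrite ler_norml => /andP [_ h1].
      have h2 : (M + 1) * d x y < U x - r by rewrite mulrC -ltr_pdivlMr //; lra.
      have := d0 x y; nra.
    - by rewrite ltNge leey in ht.
    - by exists 1 => // y _; rewrite ltNyr.
  split.
    apply/le_anti/andP; split.
      rewrite leNgt; apply/negP => hI.
      have [e [e0 he]] : exists e : R, 0 < e /\ (e%:E <= ereal_inf (range (fun x => (U x)%:E)))%E.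
        move: hI; case: (ereal_inf _) => [r| |] //.
        + by rewrite lte_fin => r0; exists r.
        + by move=> _; exists 1; split => //; rewrite leey.
      have : ((lam * e)%:E <= ereal_inf (range (fun x => (l x)%:E)))%E.
        apply: le_ereal_inf_tmp => _ [x _ <-]; rewrite lee_fin.
        have : (e%:E <= (U x)%:E)%E.
          by apply: le_trans he _; apply: ereal_inf_lbound; exists x.
        rewrite lee_fin => h; apply: le_trans (Ul x); by rewrite ler_pM2l.
      rewrite hinf lee_fin; have := mulr_gt0 hlam e0; lra.
    by apply: le_ereal_inf_tmp => _ [x _ <-]; rewrite lee_fin.
  by move=> x; rewrite gU -EFinM -EFinD; congr EFin; lra.
exists (fun x => (U x)%:E); split; first exact: solU.
split.
  move=> w /(sol_real hd hlam) [v [wE [sv pv]]].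
  rewrite wE; apply: funext => x; congr EFin; apply/le_anti/andP; split.
    exact: leU.
  exact: (compare hd hc hlam hM subU sv pv).
exists U; split => //; split.
  exists (M / lam) => x; case: (subU) => [U0 [Ul _]].
  have M0 : 0 <= M by apply: le_trans (hM x).
  have : U x <= M / lam.
    rewrite ler_pdivlMr // mulrC; apply: le_trans (Ul x) _.
    exact: le_trans (ler_norm _) (hM x).
  have : 0 <= M / lam by rewrite divr_ge0 // ltW.
  rewrite ler_norml; have := U0 x; lra.
by exists M.
Qed.
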